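(* For every $n\ge3$, $\mathrm{PSR}_n(n-2)=\mathrm{StoRec}_n$.
   Context: $K_n^0$ is the complete graph on vertex set $\{0,1,\dots,n\}$ with sink $0$; every vertex has degree $n$. A configuration is $c\in\mathbb{Z}_{\ge0}^n$, stable if $c_i\le n-1$ for all $i$; $c^{\max}=(n-1,\dots,n-1)$. A deterministic toppling of an unstable vertex $i$ sends one grain to each neighbour (grains sent to the sink disappear). A stochastic toppling (parameter $p\in(0,1)$) of an unstable vertex $i$ sends, independently for each incident edge, one grain along it with probability $p$, else keeps it. For $k\in\{0,\dots,n\}$, the $k$-partial SSM on $K_n^0$ is the model in which vertices $1,\dots,k$ topple stochastically and vertices $k+1,\dots,n$ topple deterministically; its Markov chain on stable configurations adds a grain at vertex $i$ with probability $\mu_i>0$ and then stabilises. $\mathrm{PSR}_n(k)$ is its set of recurrent states; equivalently, the stable configurations reachable from $c^{\max}$ by a finite sequence of grain additions and topplings of unstable vertices in which vertices $k+1,\dots,n$ topple deterministically and vertices $1,\dots,k$ send one grain along each edge of an arbitrary subset of their incident edges. $\mathrm{StoRec}_n=\mathrm{PSR}_n(n)$ is the set of recurrent states of the SSM (all vertices topple stochastically). *)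

(* Defs.v *)
From mathcomp Require Import all_boot.
Set Implicit Arguments. Unset Strict Implicit. Unset Printing Implicit Defensive.

(* Complete graph K_n^0 on {0,1,...,n}, sink 0.  Non-sink vertex v in {1..n}
   is represented by i : 'I_n with v = i + 1.  Every vertex has degree n:
   one edge to each other non-sink vertex and one edge to the sink. *)

Definition config (n : nat) := {ffun 'I_n -> nat}.

Definition stable n (c : config n) : Prop := forall i, c i <= n.-1.

Definition cmax n : config n := [ffun _ => n.-1].

Definition add_grain n (c : config n) (i : 'I_n) : config n :=
  [ffun j => c j + (j == i)].

(* Toppling of i, sending one grain along each edge to a non-sink neighbour
   j in S (S must not contain i), and one grain to the sink iff b (grains sent
   to the sink disappear). *)
Definition topple_sub n (c : config n) (i : 'I_n) (S : {set 'I_n}) (b : bool)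
  : config n :=
  [ffun j => if j == i then c j - (#|S| + b) else c j + (j \in S)].

(* k-partial rules: vertices i with i < k (i.e. vertices 1..k) are stochastic,
   the others deterministic.  One step of the reachability process. *)
Inductive pstep (n k : nat) : config n -> config n -> Prop :=
| pstep_add (c : config n) (i : 'I_n) : @pstep n k c (add_grain c i)
| pstep_det (c : config n) (i : 'I_n) :
    n <= c i -> k <= i ->
    @pstep n k c (topple_sub c i [set j | j != i] true)
| pstep_sto (c : config n) (i : 'I_n) (S : {set 'I_n}) (b : bool) :
    n <= c i -> i < k -> i \notin S ->
    @pstep n k c (topple_sub c i S b).

Inductive preach (n k : nat) : config n -> config n -> Prop :=
| preach_refl (c : config n) : @preach n k c c
| preach_step (c d e : config n) :
    @preach n k c d -> @pstep n k d e -> @preach n k c e.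

Definition PSR (n k : nat) (c : config n) : Prop :=
  stable c /\ @preach n k (cmax n) c.

Definition StoRec (n : nat) (c : config n) : Prop := @PSR n n c.

(* Main.v *)
Require Import Defs.
From mathcomp Require Import all_boot.
From mathcomp Require Import zify.
From Stdlib Require Import Classical.


Lemma preach_trans n k (c d e : config n) :
  preach k c d -> preach k d e -> preach k c e.
Proof.
move=> H1 H2; move: H1; elim: H2 => [//|d1 d2 d3 _ IH Hs] H1.
exact: preach_step (IH H1) Hs.
Qed.

Lemma preach1 n k (c d : config n) : pstep k c d -> preach k c d.
Proof. by move=> H; apply: preach_step (preach_refl _ _) H. Qed.

Lemma up_lem n k (c : config n) : forall s (d d' : config n),
  \sum_j (d' j - d j) <= s -> (forall j, d j <= d' j) ->
  preach k c d -> preach k c d'.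
Proof.
elim=> [|s IH] d d' Hs Hle Hr.
  have -> : d' = d; last by [].
  apply/ffunP=> j; apply/eqP; rewrite eqn_leq Hle andbT.
  have : d' j - d j <= \sum_j (d' j - d j).
    by rewrite (bigD1 j) //= leq_addr.
  move: Hs; rewrite leqn0 => /eqP -> ; rewrite leqn0 subn_eq0 //.
case: (pickP (fun j => d j < d' j)) => [j Hj|Hno]; last first.
  have -> : d' = d; last by [].
  apply/ffunP=> j; apply/eqP; rewrite eqn_leq Hle andbT.
  by move: (Hno j) => /negbT; rewrite -leqNgt.
apply: (IH (add_grain d j)) => //.
- have E : \sum_i (d' i - d i) = (\sum_i (d' i - add_grain d j i)).+1.
    rewrite (bigD1 j) //= [in RHS](bigD1 j) //= /add_grain ffunE eqxx.
    rewrite -addSn; congr (_ + _); first lia.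
    apply: eq_bigr => i Hi; rewrite ffunE (negbTE Hi) addn0 //.
  by move: Hs; rewrite E.
- move=> i; move: (Hle i) Hj; rewrite /add_grain ffunE /=; case: eqP => [->|_]; lia.
- exact: preach_step Hr (pstep_add _ _ _).
Qed.

Lemma up n k (c d d' : config n) :
  (forall j, d j <= d' j) -> preach k c d -> preach k c d'.
Proof. exact: (@up_lem n k c _ d d' (leqnn _)). Qed.

Lemma down_lem n k (c : config n) : forall s (d d' : config n),
  \sum_j (d j - d' j) <= s -> (forall j, d' j <= d j) ->
  (forall j, d' j < d j -> (j < k) && (n.-1 <= d' j)) ->
  preach k c d -> preach k c d'.
Proof.
elim=> [|s IH] d d' Hs Hle Hk Hr.
  have -> : d' = d; last by [].
  apply/ffunP=> j; apply/eqP; rewrite eqn_leq Hle /=.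
  have : d j - d' j <= \sum_j (d j - d' j).
    by rewrite (bigD1 j) //= leq_addr.
  move: Hs; rewrite leqn0 => /eqP -> ; rewrite leqn0 subn_eq0 //.
case: (pickP (fun j => d' j < d j)) => [j Hj|Hno]; last first.
  have -> : d' = d; last by [].
  apply/ffunP=> j; apply/eqP; rewrite eqn_leq Hle /=.
  by move: (Hno j) => /negbT; rewrite -leqNgt.
have /andP [Hjk Hjn] := Hk j Hj.
set d1 := topple_sub d j set0 true.
have Hd1 : forall i, d1 i = d i - (i == j).
  move=> i; rewrite /d1 /topple_sub ffunE cards0 in_set0; case: eqP => [->|_]; lia.
apply: (IH d1) => //.
- have E : \sum_i (d i - d' i) = (\sum_i (d1 i - d' i)).+1.
    rewrite (bigD1 j) //= [in RHS](bigD1 j) //= Hd1 eqxx.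
    rewrite -addSn; congr (_ + _); first lia.
    apply: eq_bigr => i Hi; rewrite Hd1 (negbTE Hi) subn0 //.
  by move: Hs; rewrite E.
- move=> i; move: (Hle i) Hj => /=; rewrite Hd1; case: eqP => [->|_]; lia.
- move=> i H; apply: Hk; move: H; rewrite Hd1; case: (i == j) => /=; lia.
- apply: preach_step Hr _; apply: pstep_sto => //; last by rewrite in_set0.
  have := ltn_ord j; move: Hjn Hj => /=; lia.
Qed.

Lemma adjust n k (c d d' : config n) :
  preach k c d -> (forall j, d j <= d' j \/ (j < k /\ n.-1 <= d' j)) ->
  preach k c d'.
Proof.
move=> Hr H.
pose m : config n := [ffun j => maxn (d j) (d' j)].
have Hm : preach k c m by apply: up Hr => j; rewrite ffunE leq_maxl.
apply: (@down_lem n k c _ m d' (leqnn _)) Hm.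
- by move=> j; rewrite ffunE leq_maxr.
- move=> j; rewrite ffunE => Hj; case: (H j) => [H1|[H1 H2]].
    by move: Hj; rewrite (maxn_idPr H1) ltnn.
  by rewrite H1 H2.
Qed.

Set Implicit Arguments. Unset Strict Implicit. Unset Printing Implicit Defensive.

Definition Inv n (d : config n) :=
  forall A : {set 'I_n}, 'C(#|A|, 2) <= \sum_(i in A) d i.

Lemma Inv_cmax n : Inv (cmax n).
Proof.
move=> A; rewrite (eq_bigr (fun _ => n.-1)); last by move=> i _; rewrite ffunE.
rewrite sum_nat_const bin2 leq_half_double.
have : #|A| <= n by rewrite -[X in _ <= X]card_ord max_card.
nia.
Qed.

Lemma sum_in_card n (B S : {set 'I_n}) :
  \sum_(j in B) (j \in S : nat) = #|B :&: S|.
Proof.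
rewrite (big_setID S) /= -sum1_card [X in _ + X]big1 ?addn0.
  by apply: eq_bigr => j; rewrite inE => /andP [_ ->].
by move=> j; rewrite inE => /andP [/negbTE -> _].
Qed.

Lemma Inv_topple n (d : config n) (i : 'I_n) (S : {set 'I_n}) (b : bool) :
  n <= d i -> i \notin S -> Inv d -> Inv (topple_sub d i S b).
Proof.
move=> Hn HiS H A.
case: (boolP (i \in A)) => HiA; last first.
  apply: leq_trans (H A) _; apply: leq_sum => j Hj.
  rewrite /topple_sub ffunE; case: eqP => [Ej|_]; last exact: leq_addr.
  by move: HiA; rewrite -Ej Hj.
set B := A :\ i.
have HA : #|A| = #|B|.+1 by rewrite (cardsD1 i A) HiA.
rewrite (big_setD1 _ HiA) /= HA binS bin1.
have HB : \sum_(j in B) topple_sub d i S b j = \sum_(j in B) d j + #|B :&: S|.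
  rewrite -sum_in_card -big_split /=; apply: eq_bigr => j.
  move=> Hj; rewrite /topple_sub ffunE; move: Hj; rewrite /B !inE => /andP [/negbTE -> _] //.
rewrite HB /topple_sub ffunE eqxx.
have H1 := H B.
have H2 : #|S :&: B| + #|S :\: B| = #|S| by rewrite cardsID.
have H3 : #|S :\: B| + #|A| <= n.
  have : #|S :\: B| <= #|~: A|.
    apply: subset_leq_card; apply/subsetP => j; rewrite !inE => /andP [HjB HjS].
    move: HjB; rewrite /B ?inE negb_and negbK; case/orP => [/eqP Ej|->//].
    by move: HiS; rewrite -Ej HjS.
  have := cardsC A; rewrite card_ord; lia.
rewrite setIC in H2.
have Hb : (b : nat) <= 1 by case: b {HB}.
lia.
Qed.

Lemma Inv_step n k (c d : config n) : pstep k c d -> Inv c -> Inv d.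
Proof.
case=> [c0 i|c0 i Hn _|c0 i S b Hn _ HiS] H.
- move=> A; apply: leq_trans (H A) _; apply: leq_sum => j _.
  by rewrite ffunE leq_addr.
- apply: Inv_topple => //; by rewrite inE eqxx.
- exact: Inv_topple.
Qed.

Lemma Inv_reach n k (d : config n) : preach k (cmax n) d -> Inv d.
Proof.
move=> H.
suff HH : forall c, preach k c d -> c = cmax n -> Inv d by exact: HH H erefl.
move=> c H'; elim: H' => [c0 ->|c0 d0 e0 _ IH Hs E]; first exact: Inv_cmax.
exact: Inv_step Hs (IH E).
Qed.


Definition eG n (G : {set {set 'I_n}}) (A : {set 'I_n}) :=
  #|[set P in G | P \subset A]|.
Definition HH n (G : {set {set 'I_n}}) (f : 'I_n -> nat) :=
  forall A, eG G A <= \sum_(i in A) f i.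

Lemma eG_anti n (G G' : {set {set 'I_n}}) A : G' \subset G -> eG G' A <= eG G A.
Proof.
move=> H; apply: subset_leq_card; apply/subsetP => P; rewrite !inE => /andP [HP ->].
by rewrite (subsetP H).
Qed.

Lemma HH_anti n (G G' : {set {set 'I_n}}) f : G' \subset G -> HH G f -> HH G' f.
Proof. by move=> H1 H2 A; apply: leq_trans (eG_anti A H1) (H2 A). Qed.

Lemma HH_mono n (G : {set {set 'I_n}}) (f g : 'I_n -> nat) :
  (forall i, f i <= g i) -> HH G f -> HH G g.
Proof. by move=> H1 H2 A; apply: leq_trans (H2 A) _; apply: leq_sum. Qed.

Lemma sumUI n (f : 'I_n -> nat) (A B : {set 'I_n}) :
  \sum_(i in A :|: B) f i + \sum_(i in A :&: B) f i =
  \sum_(i in A) f i + \sum_(i in B) f i.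
Proof.
rewrite (big_setID B) [in RHS](big_setID B) /=.
have -> : (A :|: B) :&: B = B.
  by apply/setP=> x; rewrite !inE; case: (x \in A); case: (x \in B).
have -> : (A :|: B) :\: B = A :\: B.
  by apply/setP=> x; rewrite !inE; case: (x \in A); case: (x \in B).
lia.
Qed.

Lemma eG_super n (G : {set {set 'I_n}}) (u w : 'I_n) (A B : {set 'I_n}) :
  [set u; w] \in G -> u \in A -> w \notin A -> w \in B -> u \notin B ->
  eG G A + eG G B + 1 <= eG G (A :|: B) + eG G (A :&: B).
Proof.
move=> HX uA wA wB uB.
set PA := [set P in G | P \subset A]; set PB := [set P in G | P \subset B].
have HI : [set P in G | P \subset A :&: B] = PA :&: PB.
  by apply/setP=> P; rewrite !inE subsetI; case: (P \in G).
have HU : [set u; w] |: (PA :|: PB) \subset [set P in G | P \subset A :|: B].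
  apply/subsetP => P; rewrite !inE => /orP [/eqP ->|/orP [/andP [-> H]|/andP [-> H]]].
  - rewrite HX /=; apply/subsetP => x; rewrite !inE.
    by case/orP => /eqP ->; rewrite ?uA ?wB ?orbT.
  - by apply: subset_trans H _; apply/subsetP => x; rewrite !inE => ->.
  - by apply: subset_trans H _; apply/subsetP => x; rewrite !inE => ->; rewrite orbT.
have Hn : [set u; w] \notin PA :|: PB.
  rewrite !inE negb_or !negb_and; apply/andP; split; apply/orP; right.
  - by apply/negP => /subsetP H; move: wA; rewrite H // !inE eqxx orbT.
  - by apply/negP => /subsetP H; move: uB; rewrite H // !inE eqxx.
have := subset_leq_card HU; rewrite cardsU1 Hn.
rewrite /eG HI; have := cardsUI PA PB; rewrite -/PA -/PB; move=> H1 /= H2.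
move: H1 H2; set x := #|PA :|: PB|; set y := #|PA :&: PB|.
set z := #|[set P in G | P \subset A :|: B]|; set a := #|PA|; set b := #|PB|; lia.
Qed.

Lemma sub_delta n (f : 'I_n -> nat) (u : 'I_n) (A : {set 'I_n}) : 0 < f u ->
  \sum_(i in A) (f i - (i == u)) + (u \in A) = \sum_(i in A) f i.
Proof.
move=> Hu; case: (boolP (u \in A)) => HuA.
  rewrite (big_setD1 _ HuA) [in RHS](big_setD1 _ HuA) /= eqxx.
  have -> : \sum_(i in A :\ u) (f i - (i == u)) = \sum_(i in A :\ u) f i.
    by apply: eq_bigr => i; rewrite !inE => /andP [/negbTE -> _]; rewrite subn0.
  rewrite (_ : nat_of_bool true = 1) //; set s := \sum_(i in A :\ u) f i; lia.
rewrite addn0; apply: eq_bigr => i Hi.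
have -> : (i == u) = false by apply/eqP => E; move: HuA; rewrite -E Hi.
by rewrite subn0.
Qed.

Lemma eG_del n (G : {set {set 'I_n}}) X A : X \in G ->
  eG (G :\ X) A + (X \subset A) = eG G A.
Proof.
move=> HX; rewrite /eG [in RHS](cardsD1 X) inE HX /= addnC; congr (_ + _).
by apply: eq_card => P; rewrite !inE andbA.
Qed.

Lemma tight n (G : {set {set 'I_n}}) (f : 'I_n -> nat) (u w : 'I_n) :
  HH G f -> [set u; w] \in G -> u != w ->
  ~ (0 < f u /\ HH (G :\ [set u; w]) (fun i => f i - (i == u))) ->
  exists A : {set 'I_n}, [/\ u \in A, w \notin A & \sum_(i in A) f i <= eG G A].
Proof.
move=> H HX Huw Hn.
case: (posnP (f u)) => Hu.
  exists [set u]; split; first by rewrite inE.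
    by rewrite inE eq_sym.
  by rewrite big_set1 Hu.
have : ~ HH (G :\ [set u; w]) (fun i => f i - (i == u)) by move=> H'; apply: Hn.
move=> /not_all_ex_not [A HA]; exists A.
move/negP: HA; rewrite -ltnNge => HA.
have E1 := sub_delta A Hu.
have E2 := eG_del A HX.
have H1 := H A.
have Hsub : ([set u; w] \subset A) = (u \in A) && (w \in A).
  apply/subsetP/andP => [Hs|[H3 H4] x]; first by split; apply: Hs; rewrite !inE eqxx ?orbT.
  by rewrite !inE => /orP [/eqP ->|/eqP ->].
move: E1 E2 HA H1; rewrite Hsub.
set s1 := \sum_(i in A) (f i - _); set s2 := \sum_(i in A) f i.
set e1 := eG (G :\ _) A; set e2 := eG G A.
case: (u \in A); case: (w \in A) => /= *; first [by split => //; lia | exfalso; lia].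
Qed.

Lemma orient n (G : {set {set 'I_n}}) (f : 'I_n -> nat) (u w : 'I_n) :
  HH G f -> [set u; w] \in G -> u != w ->
  (0 < f u /\ HH (G :\ [set u; w]) (fun i => f i - (i == u))) \/
  (0 < f w /\ HH (G :\ [set u; w]) (fun i => f i - (i == w))).
Proof.
move=> H HX Huw.
case: (classic (0 < f u /\ HH (G :\ [set u; w]) (fun i => f i - (i == u)))) => H1;
  first by left.
case: (classic (0 < f w /\ HH (G :\ [set u; w]) (fun i => f i - (i == w)))) => H2;
  first by right.
exfalso.
have E : [set w; u] = [set u; w] by rewrite setUC.
have [A [uA wA HA]] := tight H HX Huw H1.
have [B [wB uB HB]] : exists B : {set 'I_n},
    [/\ w \in B, u \notin B & \sum_(i in B) f i <= eG G B].
  apply: (tight H); rewrite ?E //; by rewrite eq_sym.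
have := eG_super HX uA wA wB uB.
have := sumUI f A B.
have := H (A :|: B); have := H (A :&: B).
set a1 := \sum_(i in A :|: B) f i; set a2 := \sum_(i in A :&: B) f i.
set a3 := \sum_(i in A) f i; set a4 := \sum_(i in B) f i.
set b1 := eG G (A :|: B); set b2 := eG G (A :&: B).
lia.
Qed.

Lemma set2_inj n (v j x : 'I_n) : j != v -> [set v; j] = [set v; x] -> j = x.
Proof.
move=> Hjv E; have : j \in [set v; x] by rewrite -E !inE eqxx orbT.
by rewrite !inE (negbTE Hjv) /= => /eqP.
Qed.

Lemma peel n (v : 'I_n) : forall s (X : {set 'I_n}) (G : {set {set 'I_n}})
  (f : 'I_n -> nat),
  #|X| <= s -> v \notin X -> (forall j, j \in X -> [set v; j] \in G) -> HH G f ->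
  exists (E : {set 'I_n}) (f' : 'I_n -> nat),
   [/\ E \subset X, HH (G :\: [set [set v; j] | j in X]) f',
       (forall j, j \in X -> f' j + (j \in E) = f j),
       #|X| + f' v <= f v + #|E| &
       (forall j, j \notin X -> j != v -> f' j = f j)].
Proof.
elim=> [|s IH] X G f Hs HvX HXG H.
  move: Hs; rewrite leqn0 cards_eq0 => /eqP ->.
  exists set0, f; split.
  - exact: sub0set.
  - by rewrite imset0 setD0.
  - by move=> j; rewrite in_set0.
  - by rewrite cards0; lia.
  - by [].
case: (set_0Vmem X) => [->|[x Hx]].
  exists set0, f; split.
  - exact: sub0set.
  - by rewrite imset0 setD0.
  - by move=> j; rewrite in_set0.
  - by rewrite !cards0; lia.
  - by [].
set X' := X :\ x.
have HcX : #|X| = #|X'|.+1 by rewrite (cardsD1 x X) Hx.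
have Hvx : v != x by apply/eqP => E; move: HvX; rewrite E Hx.
set G1 := G :\ [set v; x].
have [z [Hz Hfz H1]] : exists z, [/\ z = v \/ z = x, 0 < f z &
    HH G1 (fun i => f i - (i == z))].
  case: (orient H (HXG x Hx) Hvx) => [[A1 A2]|[A1 A2]].
  - by exists v; split => //; left.
  - by exists x; split => //; right.
have HX'G1 : forall j, j \in X' -> [set v; j] \in G1.
  move=> j; rewrite !inE => /andP [Hjx HjX]; rewrite HXG // andbT.
  apply/negP => /eqP E; move: Hjx; rewrite (set2_inj _ E) ?eqxx //.
  by apply/eqP => Ej; move: HvX; rewrite -Ej HjX.
have HvX' : v \notin X' by rewrite !inE negb_and HvX orbT.
have Hs' : #|X'| <= s by move: Hs; rewrite HcX.
have [E' [f' [HE' HH' Hf'X Hf'v Hf'o]]] := IH X' G1 _ Hs' HvX' HX'G1 H1.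
have HxX' : x \notin X' by rewrite !inE eqxx.
have HxE' : x \notin E' by apply/negP => /(subsetP HE'); rewrite (negbTE HxX').
exists (if z == x then x |: E' else E'), f'; split.
- case: (z == x); last by apply: subset_trans HE' _; exact: subsetDl.
  apply/subsetP => j; rewrite !inE => /orP [/eqP ->//|/(subsetP HE')].
  by rewrite !inE => /andP [_ ->].
- apply: HH_anti HH'; apply/subsetP => P; rewrite !inE => /andP [HP HPG].
  rewrite HPG andbT; apply/andP; split.
    apply/negP => /imsetP [j Hj EP]; move: HP; rewrite EP.
    apply/negP; rewrite negbK; apply: imset_f.
    by move: Hj; rewrite !inE => /andP [_ ->].
  apply/negP => /eqP EP; move: HP; rewrite EP.
  by apply/negP; rewrite negbK; apply: imset_f.
- move=> j Hj; case: (eqVneq j x) => [->|Hjx].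
    rewrite Hf'o //; last by rewrite eq_sym.
    case: Hz => Ez; rewrite Ez in Hfz *.
      by rewrite (eq_sym x v) (negbTE Hvx) (negbTE HxE') subn0 addn0.
    rewrite eqxx /= setU11 (_ : nat_of_bool true = 1) //; move: Hfz; lia.
  have Hj' : j \in X' by rewrite !inE Hjx.
  have := Hf'X j Hj'.
  have Hjz : j != z.
    case: Hz => ->; last by [].
    by apply/eqP => Ej; move: HvX; rewrite -Ej Hj.
  rewrite (negbTE Hjz) subn0 => <-; case: (z == x) => //.
  by rewrite !inE (negbTE Hjx).
- move: Hf'v; rewrite HcX; case: Hz => Ez; rewrite Ez in Hfz *.
    rewrite (negbTE (Hvx : v != x)) eqxx (_ : nat_of_bool true = 1) //.
    move: Hfz; lia.
  rewrite eqxx cardsU1 HxE' (negbTE Hvx) subn0 (_ : nat_of_bool true = 1) //; lia.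
- move=> j Hj Hjv; rewrite Hf'o //.
    have Hjz : j != z by case: Hz => ->; last by apply/eqP => Ej; move: Hj; rewrite Ej Hx.
    by rewrite (negbTE Hjz) subn0.
  by rewrite !inE negb_and Hj orbT.
Qed.


Lemma card_neq n (a : 'I_n) : #|[set j | j != a]| = n.-1.
Proof.
have -> : [set j | j != a] = [set~ a] by apply/setP => j; rewrite !inE.
by rewrite cardsC1 card_ord.
Qed.

Lemma base n (e : config n) (a b : 'I_n) : 3 <= n -> a != b ->
  n - 2 <= a -> n - 2 <= b -> (forall j : 'I_n, j < n - 2 -> e j = n.-1) ->
  1 <= e a -> preach (n - 2) (cmax n) e.
Proof.
move=> Hn Hab Ha Hb He Hea.
set d0 := add_grain (cmax n) a.
have Hd0 : forall j, d0 j = n.-1 + (j == a) by move=> j; rewrite !ffunE.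
set d1 := topple_sub d0 a [set j | j != a] true.
have Hd1 : forall j, d1 j = if j == a then 0 else n.
  move=> j; rewrite /d1 /topple_sub ffunE card_neq !Hd0 !inE.
  have T1 : nat_of_bool true = 1 by []. have T0 : nat_of_bool false = 0 by [].
  case: (j == a) => /=; rewrite ?T1 ?T0; lia.
set d2 := topple_sub d1 b [set j | j != b] true.
have Hd2 : forall j, d2 j = if j == b then 0 else if j == a then 1 else n.+1.
  move=> j; rewrite /d2 /topple_sub ffunE card_neq !Hd1 !inE.
  case: (eqVneq j b) => [->|Hjb]; first by rewrite eq_sym (negbTE Hab); lia.
  by case: (eqVneq j a) => _ /=; lia.
have R : preach (n - 2) (cmax n) d2.
  apply: preach_step; last first.
    apply: pstep_det; last exact: Hb.
    by rewrite Hd1 eq_sym (negbTE Hab).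
  apply: preach_step; last first.
    apply: pstep_det; last exact: Ha.
    rewrite Hd0 eqxx (_ : nat_of_bool true = 1) //; lia.
  apply: preach_step (preach_refl _ _) (pstep_add _ _ _).
apply: adjust R _ => j; rewrite Hd2.
case: (eqVneq j b) => [_|Hjb]; first by left.
case: (eqVneq j a) => [E|Hja]; first by left; rewrite E.
have Ha1 := ltn_ord a; have Hb1 := ltn_ord b; have Hj1 := ltn_ord j.
have Hja' : (j : nat) != a by [].
have Hjb' : (j : nat) != b by [].
have Hab' : (a : nat) != b by [].
have Hjn : j < n - 2 by lia.
right; split => //; rewrite He //.
Qed.

Definition V n p : {set 'I_n} := [set j : 'I_n | (j < p) || (n - 2 <= j)].
Definition pairs n (W : {set 'I_n}) : {set {set 'I_n}} :=
  [set P : {set 'I_n} | (P \subset W) && (#|P| == 2)].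

Lemma main_base n (e : config n) : 3 <= n ->
  (forall j : 'I_n, j < n - 2 -> e j = n.-1) -> HH (pairs (V n 0)) e ->
  preach (n - 2) (cmax n) e.
Proof.
move=> Hn He H.
have Ha : n - 2 < n by lia.
have Hb : n - 1 < n by lia.
set a := Ordinal Ha; set b := Ordinal Hb.
have Hab : a != b by rewrite /a /b; apply/eqP => -[]; lia.
have H1 := H [set a; b].
have : 1 <= e a + e b.
  apply: leq_trans _ (leq_trans H1 _).
    rewrite /eG card_gt0; apply/set0Pn; exists [set a; b].
    rewrite !inE subxx andbT cards2 Hab eqxx andbT.
    apply/subsetP => x; rewrite !inE => /orP [] /eqP ->; rewrite /= ?leqnn; lia.
  rewrite big_setU1 /= ?big_set1 // inE //.
move=> Hs.
case: (posnP (e a)) => Hea.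
  have Hba : b != a by rewrite eq_sym.
  have Heb : 1 <= e b by move: Hs; rewrite Hea.
  apply: (base Hn Hba _ _ He Heb) => /=; lia.
apply: (base Hn Hab _ _ He Hea) => /=; lia.
Qed.

Lemma main n : 3 <= n -> forall p, p <= n - 2 -> forall e : config n, stable e ->
  (forall j : 'I_n, p <= j -> j < n - 2 -> e j = n.-1) -> HH (pairs (V n p)) e ->
  preach (n - 2) (cmax n) e.
Proof.
move=> Hn; elim=> [|p IH] Hp e Hst Hun He.
  by apply: main_base => // j Hj; apply: Hun.
have Hpn : p < n by lia.
set vp := Ordinal Hpn.
set X := V n p.
have memX : forall j : 'I_n, (j \in X) = (j < p) || (n - 2 <= j) by move=> j; rewrite inE.
have HvX : vp \notin X by rewrite memX /=; apply/negP => /orP []; lia.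
have HXG : forall j, j \in X -> [set vp; j] \in pairs (V n p.+1).
  move=> j Hj; rewrite inE cards2; apply/andP; split.
    apply/subsetP => x; rewrite !inE => /orP [] /eqP ->; first by rewrite /= ltnSn.
    by move: Hj; rewrite memX => /orP [] H; apply/orP; [left; lia|right].
  have -> : vp != j by apply/eqP => E; move: HvX; rewrite E Hj.
  by [].
have [E [f' [HEX HH' Hf'X Hf'v Hf'o]]] := peel (leqnn _) HvX HXG He.
have HcE := subset_leq_card HEX.
have Hle : forall j, f' j <= e j.
  move=> j; case: (boolP (j \in X)) => Hj; first by rewrite -(Hf'X j Hj) leq_addr.
  case: (eqVneq j vp) => [->|Hjv]; last by rewrite Hf'o.
  move: Hf'v; lia.
set e0 : config n := [ffun j => if j == vp then n.-1 else f' j].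
have R0 : preach (n - 2) (cmax n) e0.
  apply: IH; first lia.
  - move=> j; rewrite ffunE; case: ifP => _ //; apply: leq_trans (Hle j) (Hst j).
  - move=> j Hpj Hjn; rewrite ffunE; case: (eqVneq j vp) => [//|Hjv].
    have Hjv' : (j : nat) != p by [].
    rewrite Hf'o //; last by rewrite memX; apply/negP => /orP []; lia.
    apply: Hun => //; lia.
  - apply: HH_mono (HH_anti _ HH').
      move=> j; rewrite ffunE; case: eqP => [->|_] //.
      exact: leq_trans (Hle vp) (Hst vp).
    apply/subsetP => P; rewrite !inE => /andP [HPV HP2]; rewrite HP2 andbT.
    apply/andP; split.
      apply/imsetP => -[j Hj EP]; move: HvX; rewrite (subsetP HPV) //.
      by rewrite EP !inE eqxx.
    apply: subset_trans HPV _; apply/subsetP => x; rewrite !inE => /orP [] H;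
      apply/orP; [left; lia|right => //].
set d1 := add_grain e0 vp.
set W := [set j | (j \notin X) && (j != vp)].
set S := E :|: W.
set d2 := topple_sub d1 vp S true.
have HvE : vp \notin E by apply/negP => /(subsetP HEX); rewrite (negbTE HvX).
have HvS : vp \notin S by rewrite !inE negb_or HvE /= eqxx andbF.
have HEW : E :&: W = set0.
  apply/setP => j; rewrite in_set0; apply/negP; rewrite in_setI => /andP [HjE].
  by rewrite /W in_set (subsetP HEX _ HjE).
have HcS : #|S| = #|E| + #|W| by rewrite -cardsUI HEW cards0 addn0.
have HcW : #|W| + #|X| + 1 = n.
  have -> : W = ~: (vp |: X).
    by apply/setP => j; rewrite /W in_set in_setC in_setU1 negb_or andbC.
  have := cardsC (vp |: X); rewrite cardsU1 HvX card_ord /=.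
  set w := #|~: (vp |: X)|; set x := #|X|; lia.
have R2 : preach (n - 2) (cmax n) d2.
  apply: preach_step (preach_step R0 (pstep_add _ _ _)) _.
  apply: pstep_sto => //.
  rewrite /add_grain !ffunE eqxx (_ : nat_of_bool true = 1) //; lia.
apply: adjust R2 _ => j.
rewrite /d2 /topple_sub ffunE /d1 !ffunE.
case: (eqVneq j vp) => [->|Hjv].
  left; rewrite HcS (_ : nat_of_bool true = 1) //; move: Hf'v HcW.
  set a1 := #|E|; set a2 := #|W|; set a3 := #|X|; lia.
rewrite (_ : nat_of_bool false = 0) // addn0.
case: (boolP (j \in X)) => HjX.
  left; rewrite -(Hf'X j HjX) /S in_setU.
  have -> : (j \in W) = false by rewrite /W in_set HjX.
  by rewrite orbF.
right.
have Hjv' : (j : nat) != p by [].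
move: HjX; rewrite memX negb_or -!ltnNge => /andP [H1 H2].
have Hjn : j < n - 2 by [].
split => //; rewrite Hun //; lia.
Qed.


Lemma pstep_n n k (c d : config n) : k <= n -> pstep k c d -> pstep n c d.
Proof.
move=> Hk; case=> [c0 i|c0 i Hi _|c0 i S b Hi Hik HiS].
- exact: pstep_add.
- by apply: pstep_sto => //; rewrite inE eqxx.
- apply: pstep_sto => //; lia.
Qed.

Lemma preach_n n k (c d : config n) : k <= n -> preach k c d -> preach n c d.
Proof.
move=> Hk H; elim: H => [c0|c0 d0 e0 _ IH Hs]; first exact: preach_refl.
exact: preach_step IH (pstep_n Hk Hs).
Qed.

Theorem theorem5p6 (n : nat) : 3 <= n ->
  forall c : config n, @PSR n (n - 2) c <-> StoRec c.
Proof.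
move=> Hn c; split.
  case=> Hst R; split => //; apply: preach_n R; lia.
case=> Hst R; split => //.
have I := Inv_reach R.
apply: (main Hn (leqnn _)) => //.
  move=> j H1 H2; lia.
move=> A; apply: leq_trans (I A); rewrite /eG -cards_draws.
apply: eq_leq; apply: eq_card => P; rewrite !inE andbC.
have -> : P \subset V n (n - 2).
  by apply/subsetP => x _; rewrite inE; case: leqP.
by [].
Qed.
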